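(* Let $\alpha>1$ be an irrational number of finite type $\tau$ and $\beta\in\mathbb{R}$. For every sufficiently small $\epsilon>0$ there is a constant $C=C(\alpha,\beta,\epsilon)$ such that for every integer $d\ge1$ and every $N\ge1$, \[ \left|\#\{n\le N:\ d\mid n,\ n\in\mathcal{B}_{\alpha,\beta}\}-\frac{N}{\alpha d}\right|\le C\,N^{\frac{\tau}{1+\tau}+\epsilon}. \]
   Context: The type of an irrational $\alpha$ is $\tau(\alpha)=\sup\{t\in\mathbb{R}:\liminf_{n\to\infty} n^t\|\alpha n\|=0\}$, where $\|\cdot\|$ is the distance to the nearest integer; finite type means $\tau<\infty$ (one always has $\tau\ge1$). The Beatty sequence is $\mathcal{B}_{\alpha,\beta}=([\alpha n+\beta])_{n=1}^\infty$, with $[\cdot]$ the integer part. *)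

(* Defs.v *)
From Stdlib Require Import Reals Lra Lia ZArith List Classical ClassicalEpsilon.
Open Scope R_scope.

(* floor x = the integer part [x] (Int_part x = up x - 1 is the floor). *)
Definition floorR (x : R) : Z := Int_part x.

Definition dist_Z (x : R) : R :=
  Rmin (x - IZR (floorR x)) (IZR (floorR x) + 1 - x).

(* liminf_{n -> oo} n^t ||alpha n|| = 0, for the nonnegative sequence
   n^t ||alpha n||: equivalently, the sequence gets arbitrarily close to 0
   infinitely often. *)
Definition liminf_zero (t alpha : R) : Prop :=
  forall eps : R, eps > 0 -> forall M : nat, exists n : nat,
    (n >= M)%nat /\ (n >= 1)%nat /\
    Rpower (INR n) t * dist_Z (alpha * INR n) < eps.

Definition type_set (alpha : R) (t : R) : Prop := liminf_zero t alpha.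

(* alpha has finite type tau: tau = sup {t | liminf n^t ||alpha n|| = 0} < oo. *)
Definition has_type (alpha tau : R) : Prop := is_lub (type_set alpha) tau.

Definition irrational (x : R) : Prop := forall p q : Z, q <> 0%Z -> x <> IZR p / IZR q.

Definition in_beatty (alpha beta : R) (n : Z) : Prop :=
  exists m : nat, (m >= 1)%nat /\ floorR (alpha * INR m + beta) = n.

Definition decP (P : Prop) : bool :=
  if excluded_middle_informative P then true else false.

Definition beatty_div_count (alpha beta : R) (d N : nat) : nat :=
  length (filter (fun n : nat =>
     decP (Nat.divide d n /\ in_beatty alpha beta (Z.of_nat n)))
   (seq 1 N)).

(* Main.v *)
Require Import Defs.
From Stdlib Require Import Reals Lra Lia ZArith List Znumtheory Permutation Classical ClassicalEpsilon.
Open Scope R_scope.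

Lemma fl_spec x : IZR (floorR x) <= x < IZR (floorR x) + 1.
Proof. unfold floorR. destruct (base_Int_part x). lra. Qed.

Lemma fl_unique x z : IZR z <= x < IZR z + 1 -> floorR x = z.
Proof. intros H. unfold floorR. symmetry. apply Int_part_spec. lra. Qed.

Lemma fl_le z x : IZR z <= x -> (z <= floorR x)%Z.
Proof.
  intros H. destruct (fl_spec x) as [H1 H2].
  destruct (Z_le_gt_dec z (floorR x)) as [h|h]; auto.
  assert (IZR (floorR x) + 1 <= IZR z).
  { rewrite <- plus_IZR. apply IZR_le. lia. }
  lra.
Qed.

Lemma fl_lt z x : x < IZR z -> (floorR x < z)%Z.
Proof.
  intros H. destruct (fl_spec x) as [H1 H2].
  destruct (Z_lt_le_dec (floorR x) z) as [h|h]; auto.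
  apply IZR_le in h. lra.
Qed.

Lemma fl_mono x y : x <= y -> (floorR x <= floorR y)%Z.
Proof. intros H. apply fl_le. destruct (fl_spec x). lra. Qed.

Lemma fl_addZ x n : floorR (x + IZR n) = (floorR x + n)%Z.
Proof.
  apply fl_unique. rewrite plus_IZR. destruct (fl_spec x). lra.
Qed.

Fixpoint sumR (f : nat -> R) (n : nat) : R :=
  match n with O => 0 | S n => sumR f n + f n end.

Lemma sumR_ext f g n : (forall j, (j < n)%nat -> f j = g j) -> sumR f n = sumR g n.
Proof.
  induction n; simpl; intros H; auto.
  rewrite IHn by (intros; apply H; lia). rewrite H by lia. auto.
Qed.

Lemma sumR_le f g n : (forall j, (j < n)%nat -> f j <= g j) -> sumR f n <= sumR g n.
Proof.
  induction n; simpl; intros H; [lra|].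
  assert (sumR f n <= sumR g n) by (apply IHn; intros; apply H; lia).
  assert (f n <= g n) by (apply H; lia). lra.
Qed.

Lemma sumR_plus f g n : sumR (fun j => f j + g j) n = sumR f n + sumR g n.
Proof. induction n; simpl; lra. Qed.

Lemma sumR_minus f g n : sumR (fun j => f j - g j) n = sumR f n - sumR g n.
Proof. induction n; simpl; lra. Qed.

Lemma sumR_const a n : sumR (fun _ => a) n = INR n * a.
Proof. induction n; simpl sumR; [simpl; lra|]. rewrite S_INR. lra. Qed.

Lemma sumR_add f a b : sumR f (a + b) = sumR f a + sumR (fun j => f (a + j)%nat) b.
Proof.
  induction b; simpl. rewrite Nat.add_0_r. lra.
  rewrite Nat.add_succ_r. simpl. rewrite IHb. lra.
Qed.

Lemma sumR_bounds f n : (forall j, (j < n)%nat -> 0 <= f j <= 1) -> 0 <= sumR f n <= INR n.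
Proof.
  intros H. split.
  - rewrite <- (Rmult_0_r (INR n)), <- sumR_const. apply sumR_le. intros; apply H; auto.
  - rewrite <- (Rmult_1_r (INR n)), <- sumR_const. apply sumR_le. intros; apply H; auto.
Qed.

Definition sumL (h : nat -> R) (l : list nat) : R := fold_right (fun a s => h a + s) 0 l.

Lemma sumL_app h l1 l2 : sumL h (l1 ++ l2) = sumL h l1 + sumL h l2.
Proof. induction l1; simpl; [lra|]. unfold sumL in *. simpl. rewrite IHl1. lra. Qed.

Lemma sumR_sumL h n : sumR h n = sumL h (seq 0 n).
Proof.
  induction n; [reflexivity|]. cbn [sumR]. rewrite seq_S, sumL_app, IHn. unfold sumL at 3. simpl. lra.
Qed.

Lemma sumL_map h r l : sumL h (map r l) = sumL (fun j => h (r j)) l.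
Proof. induction l; simpl; auto. unfold sumL in *; simpl; rewrite IHl; auto. Qed.

Lemma sumL_perm h l l' : Permutation l l' -> sumL h l = sumL h l'.
Proof.
  induction 1; unfold sumL in *; simpl; try lra.
Qed.

Lemma sum_ind_tail q b : (b <= q)%nat ->
  sumR (fun r => if Nat.ltb (r + b) q then 0 else 1) q = INR b.
Proof.
  intros Hb. set (f := fun r => if Nat.ltb (r + b) q then 0 else 1).
  replace q with ((q - b) + b)%nat at 1 by lia.
  rewrite sumR_add. unfold f.
  rewrite (sumR_ext _ (fun _ => 0)).
  2:{ intros j Hj. destruct (Nat.ltb_spec (j+b) q); auto; lia. }
  rewrite (sumR_ext (fun j => if Nat.ltb (q - b + j + b) q then 0 else 1) (fun _ => 1)).
  2:{ intros j Hj. destruct (Nat.ltb_spec (q - b + j+b) q); auto; lia. }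
  rewrite !sumR_const. lra.
Qed.

Lemma hermite q x : (1 <= q)%nat ->
  sumR (fun r => IZR (floorR (x + INR r / INR q))) q = IZR (floorR (INR q * x)).
Proof.
  intros Hq.
  set (n := floorR (INR q * x)).
  set (qz := Z.of_nat q).
  assert (Hqz : (0 < qz)%Z) by (unfold qz; lia).
  set (a := (n / qz)%Z). set (b := (n mod qz)%Z).
  assert (Hn : n = (qz * a + b)%Z) by apply Z_div_mod_eq_full.
  assert (Hb : (0 <= b < qz)%Z) by (apply Z.mod_pos_bound; auto).
  set (bn := Z.to_nat b).
  assert (Hbn : IZR b = INR bn) by (unfold bn; rewrite INR_IZR_INZ, Z2Nat.id by lia; reflexivity).
  assert (Hbq : (bn < q)%nat) by (unfold bn; unfold qz in Hb; lia).
  assert (HQ : INR q = IZR qz) by (unfold qz; apply INR_IZR_INZ).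
  assert (HQp : 0 < INR q) by (apply lt_0_INR; lia).
  destruct (fl_spec (INR q * x)) as [F1 F2]. fold n in F1, F2.
  rewrite Hn, plus_IZR, mult_IZR, <- HQ, Hbn in F1, F2.
  rewrite (sumR_ext _ (fun r => IZR a + (if Nat.ltb (r + bn) q then 0 else 1))).
  2:{ intros r Hr.
      assert (Hy : INR q * (x + INR r / INR q) = INR q * x + INR r) by (field; lra).
      destruct (Nat.ltb_spec (r + bn) q) as [h|h].
      - assert (h' : INR r + INR bn + 1 <= INR q).
        { rewrite <- plus_INR, <- S_INR. apply le_INR. lia. }
        rewrite Rplus_0_r. f_equal. apply fl_unique. split.
        + apply (Rmult_le_reg_l (INR q)); auto. rewrite Hy.
          assert (0 <= INR r) by apply pos_INR. assert (0 <= INR bn) by apply pos_INR. lra.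
        + apply (Rmult_lt_reg_l (INR q)); auto. rewrite Hy. lra.
      - assert (h' : INR q <= INR r + INR bn) by (rewrite <- plus_INR; apply le_INR; lia).
        assert (h'' : INR r + INR bn + 1 <= 2 * INR q).
        { replace 2 with (INR 2) by (simpl; lra). rewrite <- mult_INR, <- plus_INR, <- S_INR.
          apply le_INR. lia. }
        rewrite <- (plus_IZR a 1). f_equal. apply fl_unique. rewrite plus_IZR. split.
        + apply (Rmult_le_reg_l (INR q)); auto. rewrite Hy. lra.
        + apply (Rmult_lt_reg_l (INR q)); auto. rewrite Hy. lra. }
  rewrite sumR_plus, sumR_const, sum_ind_tail by lia.
  fold n. rewrite Hn, plus_IZR, mult_IZR, <- HQ, Hbn. lra.
Qed.

Definition rho (q : nat) (p : Z) (j : nat) : nat := Z.to_nat ((Z.of_nat j * p) mod Z.of_nat q).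

Lemma rho_lt q p j : (1 <= q)%nat -> (rho q p j < q)%nat.
Proof.
  intros Hq. unfold rho.
  assert (H := Z.mod_pos_bound (Z.of_nat j * p) (Z.of_nat q) ltac:(lia)). lia.
Qed.

Lemma rho_inj q p i j : (1 <= q)%nat -> Z.gcd (Z.of_nat q) p = 1%Z ->
  (i < q)%nat -> (j < q)%nat -> rho q p i = rho q p j -> i = j.
Proof.
  intros Hq Hg Hi Hj E. unfold rho in E.
  set (qz := Z.of_nat q) in *.
  assert (B1 := Z.mod_pos_bound (Z.of_nat i * p) qz ltac:(unfold qz; lia)).
  assert (B2 := Z.mod_pos_bound (Z.of_nat j * p) qz ltac:(unfold qz; lia)).
  assert (E' : ((Z.of_nat i * p) mod qz = (Z.of_nat j * p) mod qz)%Z) by lia.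
  assert (D1 := Z_div_mod_eq_full (Z.of_nat i * p) qz).
  assert (D2 := Z_div_mod_eq_full (Z.of_nat j * p) qz).
  assert (Hd : (qz | p * (Z.of_nat i - Z.of_nat j))%Z).
  { exists ((Z.of_nat i * p) / qz - (Z.of_nat j * p) / qz)%Z. lia. }
  apply Z.gauss in Hd; auto.
  destruct Hd as [k Hk]. unfold qz in Hk.
  assert (k = 0%Z) by nia. subst k. lia.
Qed.

Lemma sum_perm q p h : (1 <= q)%nat -> Z.gcd (Z.of_nat q) p = 1%Z ->
  sumR (fun j => h (rho q p j)) q = sumR h q.
Proof.
  intros Hq Hg. rewrite !sumR_sumL, <- sumL_map. apply sumL_perm.
  apply NoDup_Permutation_bis.
  - apply FinFun.Injective_map_NoDup_in; [|apply seq_NoDup].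
    intros x y Hx Hy. apply in_seq in Hx, Hy. apply rho_inj; auto; lia.
  - rewrite length_map; auto.
  - intros y Hy. apply in_map_iff in Hy. destruct Hy as [x [<- Hx]].
    apply in_seq. assert (H := rho_lt q p x Hq). lia.
Qed.

Definition Dq (q : nat) (p : Z) : R :=
  sumR (fun j => IZR ((Z.of_nat j * p) / Z.of_nat q)) q.

Lemma floor_sum_rat q p x : (1 <= q)%nat -> Z.gcd (Z.of_nat q) p = 1%Z ->
  sumR (fun j => IZR (floorR (x + INR j * IZR p / INR q))) q
  = Dq q p + IZR (floorR (INR q * x)).
Proof.
  intros Hq Hg.
  assert (HQp : 0 < INR q) by (apply lt_0_INR; lia).
  rewrite (sumR_ext _ (fun j => IZR ((Z.of_nat j * p) / Z.of_nat q)
             + IZR (floorR (x + INR (rho q p j) / INR q)))).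
  2:{ intros j Hj.
      set (m := (Z.of_nat j * p)%Z).
      assert (Hm := Z_div_mod_eq_full m (Z.of_nat q)).
      assert (Hb := Z.mod_pos_bound m (Z.of_nat q) ltac:(lia)).
      assert (Hr : INR (rho q p j) = IZR (m mod Z.of_nat q)).
      { unfold rho. fold m. rewrite INR_IZR_INZ, Z2Nat.id by lia. reflexivity. }
      assert (E : x + INR j * IZR p / INR q
                  = (x + INR (rho q p j) / INR q) + IZR (m / Z.of_nat q)).
      { rewrite Hr. assert (IZR m = INR q * IZR (m / Z.of_nat q) + IZR (m mod Z.of_nat q)).
        { rewrite Hm at 1. rewrite plus_IZR, mult_IZR, <- INR_IZR_INZ. reflexivity. }
        assert (IZR m = INR j * IZR p) by (unfold m; rewrite mult_IZR, <- INR_IZR_INZ; reflexivity).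
        replace (INR j * IZR p) with (INR q * IZR (m / Z.of_nat q) + IZR (m mod Z.of_nat q)) by lra.
        field. lra. }
      rewrite E, fl_addZ, plus_IZR. lra. }
  rewrite sumR_plus. unfold Dq. f_equal.
  rewrite (sum_perm q p (fun r => IZR (floorR (x + INR r / INR q)))); auto.
  apply hermite; auto.
Qed.

Definition indL (L y : R) : R := IZR (floorR y) - IZR (floorR (y - L)).

Lemma indL_bounds L y : 0 < L < 1 -> 0 <= indL L y <= 1.
Proof.
  intros HL. unfold indL.
  assert (H1 := fl_mono (y - L) y ltac:(lra)).
  assert (H2 : (floorR y - 1 <= floorR (y - L))%Z).
  { apply fl_le. rewrite minus_IZR. destruct (fl_spec y). lra. }
  apply IZR_le in H1. apply IZR_le in H2. rewrite minus_IZR in H2. lra.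
Qed.

Lemma sandwich q p th z : (1 <= q)%nat -> Z.gcd (Z.of_nat q) p = 1%Z ->
  Rabs (INR q * th - IZR p) <= 1 / INR q ->
  Dq q p + INR q * z - 2 < sumR (fun j => IZR (floorR (z + INR j * th))) q
  <= Dq q p + INR q * z + 1.
Proof.
  intros Hq Hg He.
  assert (HQp : 0 < INR q) by (apply lt_0_INR; lia).
  assert (Hd : forall j, (j < q)%nat ->
     - (1 / INR q) <= INR j * th - INR j * IZR p / INR q <= 1 / INR q).
  { intros j Hj. set (e := INR q * th - IZR p) in *.
    assert (E : INR j * th - INR j * IZR p / INR q = (INR j / INR q) * e)
      by (unfold e; field; lra).
    rewrite E.
    assert (W : 0 <= INR j / INR q <= 1).
    { assert (0 <= INR j) by apply pos_INR. assert (INR j <= INR q) by (apply le_INR; lia).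
      split. unfold Rdiv; apply Rmult_le_pos; [lra|]. apply Rlt_le, Rinv_0_lt_compat; lra.
      apply (Rmult_le_reg_r (INR q)); auto. unfold Rdiv. rewrite Rmult_assoc, Rinv_l; lra. }
    assert (Ee : - (1/INR q) <= e <= 1 / INR q).
    { revert He. unfold Rabs. destruct (Rcase_abs e); lra. }
    nra. }
  split.
  - assert (L1 : Dq q p + IZR (floorR (INR q * (z - 1 / INR q)))
                 <= sumR (fun j => IZR (floorR (z + INR j * th))) q).
    { rewrite <- floor_sum_rat; auto. apply sumR_le. intros j Hj.
      apply IZR_le, fl_mono. specialize (Hd j Hj). lra. }
    destruct (fl_spec (INR q * (z - 1 / INR q))).
    replace (INR q * (z - 1 / INR q)) with (INR q * z - 1) in * by (field; lra).
    lra.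
  - assert (L1 : sumR (fun j => IZR (floorR (z + INR j * th))) q
                 <= Dq q p + IZR (floorR (INR q * (z + 1 / INR q)))).
    { rewrite <- floor_sum_rat; auto. apply sumR_le. intros j Hj.
      apply IZR_le, fl_mono. specialize (Hd j Hj). lra. }
    destruct (fl_spec (INR q * (z + 1 / INR q))).
    replace (INR q * (z + 1 / INR q)) with (INR q * z + 1) in * by (field; lra).
    lra.
Qed.

Lemma block q p x th L : (1 <= q)%nat -> Z.gcd (Z.of_nat q) p = 1%Z ->
  Rabs (INR q * th - IZR p) <= 1 / INR q -> 0 < L < 1 ->
  Rabs (sumR (fun j => indL L (x + INR j * th)) q - INR q * L) <= 3.
Proof.
  intros Hq Hg He HL. unfold indL. rewrite sumR_minus.
  rewrite (sumR_ext (fun j => IZR (floorR (x + INR j * th - L)))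
                    (fun j => IZR (floorR ((x - L) + INR j * th)))).
  2:{ intros j _. do 2 f_equal. lra. }
  destruct (sandwich q p th x Hq Hg He).
  destruct (sandwich q p th (x - L) Hq Hg He).
  apply Rabs_le. lra.
Qed.

Lemma Rabs_le_inv2 x a : Rabs x <= a -> - a <= x <= a.
Proof. unfold Rabs. destruct (Rcase_abs x); lra. Qed.

Lemma global th c L q p : (1 <= q)%nat -> Z.gcd (Z.of_nat q) p = 1%Z ->
  Rabs (INR q * th - IZR p) <= 1 / INR q -> 0 < L < 1 ->
  forall K, Rabs (sumR (fun j => indL L (c + INR (S j) * th)) K - INR K * L)
            <= 3 * INR K / INR q + INR q.
Proof.
  intros Hq Hg He HL.
  assert (HQp : 0 < INR q) by (apply lt_0_INR; lia).
  intros K. induction K as [K IH] using lt_wf_ind.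
  destruct (Nat.lt_ge_cases K q) as [Hk|Hk].
  - assert (Hb := sumR_bounds (fun j => indL L (c + INR (S j) * th)) K
                    (fun j _ => indL_bounds L _ HL)).
    assert (HK : INR K <= INR q) by (apply le_INR; lia).
    assert (0 <= INR K) by apply pos_INR.
    assert (0 <= 3 * INR K / INR q).
    { unfold Rdiv. apply Rmult_le_pos; [lra|]. apply Rlt_le, Rinv_0_lt_compat; lra. }
    apply Rabs_le. nra.
  - replace K with ((K - q) + q)%nat by lia.
    rewrite sumR_add. cbv beta.
    rewrite (sumR_ext (fun j => indL L (c + INR (S (K - q + j)) * th)) (fun j => indL L ((c + INR (S (K - q)) * th) + INR j * th))).
    2:{ intros j _. f_equal. rewrite !S_INR, plus_INR. ring. }
    specialize (IH (K - q)%nat ltac:(lia)).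
    assert (B := block q p (c + INR (S (K - q)) * th) th L Hq Hg He HL).
    rewrite plus_INR.
    replace (3 * (INR (K - q) + INR q) / INR q) with (3 * INR (K - q) / INR q + 3) by (field; lra).
    apply Rabs_le. apply Rabs_le_inv2 in IH. apply Rabs_le_inv2 in B.
    lra.
Qed.

Lemma php Q (f : nat -> nat) : (forall j, (j <= Q)%nat -> (f j < Q)%nat) ->
  exists i j, (i < j <= Q)%nat /\ f i = f j.
Proof.
  intros Hf. apply NNPP. intros Hn.
  assert (ND : NoDup (map f (seq 0 (S Q)))).
  { apply FinFun.Injective_map_NoDup_in; [|apply seq_NoDup].
    intros x y Hx Hy E. apply in_seq in Hx, Hy.
    destruct (Nat.lt_total x y) as [h|[h|h]]; auto.
    - exfalso. apply Hn. exists x, y. split; auto. lia.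
    - exfalso. apply Hn. exists y, x. split; auto. lia. }
  assert (Inc : incl (map f (seq 0 (S Q))) (seq 0 Q)).
  { intros y Hy. apply in_map_iff in Hy. destruct Hy as [x [<- Hx]].
    apply in_seq in Hx. apply in_seq. specialize (Hf x ltac:(lia)). lia. }
  assert (H := NoDup_incl_length ND Inc).
  rewrite length_map, !length_seq in H. lia.
Qed.

Lemma reduce th Q q0 p0 : (1 <= q0 <= Q)%nat ->
  Rabs (INR q0 * th - IZR p0) <= 1 / INR Q ->
  exists q p, (1 <= q <= Q)%nat /\ Z.gcd (Z.of_nat q) p = 1%Z /\
    Rabs (INR q * th - IZR p) <= 1 / INR Q.
Proof.
  intros Hq He.
  set (g := Z.gcd p0 (Z.of_nat q0)).
  assert (Hg0 : (0 <= g)%Z) by apply Z.gcd_nonneg.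
  assert (Hgn : g <> 0%Z).
  { intros E. apply Z.gcd_eq_0 in E. lia. }
  destruct (Z.gcd_divide_r p0 (Z.of_nat q0)) as [k Hk]. fold g in Hk.
  destruct (Z.gcd_divide_l p0 (Z.of_nat q0)) as [k' Hk']. fold g in Hk'.
  assert (Hc := Z.gcd_div_gcd p0 (Z.of_nat q0) g Hgn eq_refl).
  rewrite Hk, Hk' in Hc. rewrite !Z.div_mul in Hc by auto.
  assert (Hkpos : (1 <= k)%Z) by nia.
  exists (Z.to_nat k), k'. split; [nia|]. split.
  - rewrite Z2Nat.id by lia. rewrite Z.gcd_comm. auto.
  - rewrite INR_IZR_INZ, Z2Nat.id by lia.
    rewrite INR_IZR_INZ, Hk, Hk', !mult_IZR in He.
    replace (IZR k * IZR g * th - IZR k' * IZR g) with (IZR g * (IZR k * th - IZR k')) in He by ring.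
    rewrite Rabs_mult, Rabs_pos_eq in He by (apply IZR_le; lia).
    assert (1 <= IZR g) by (apply IZR_le; lia).
    assert (0 <= Rabs (IZR k * th - IZR k')) by apply Rabs_pos.
    nra.
Qed.

Lemma dirichlet th Q : (1 <= Q)%nat ->
  exists q p, (1 <= q <= Q)%nat /\ Z.gcd (Z.of_nat q) p = 1%Z /\
    Rabs (INR q * th - IZR p) <= 1 / INR Q.
Proof.
  intros HQ.
  assert (HQp : 0 < INR Q) by (apply lt_0_INR; lia).
  set (fr := fun y => y - IZR (floorR y)).
  assert (Hfr : forall y, 0 <= fr y < 1) by (intros y; unfold fr; destruct (fl_spec y); lra).
  set (f := fun j => Z.to_nat (floorR (INR Q * fr (INR j * th)))).
  assert (Hb : forall j, (0 <= floorR ((INR Q * fr (INR j * th))%R) < Z.of_nat Q)%Z).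
  { intros j. specialize (Hfr (INR j * th)). split.
    - apply fl_le. nra.
    - apply fl_lt. rewrite <- INR_IZR_INZ. nra. }
  destruct (php Q f) as [i [j [Hij E]]].
  { intros j _. unfold f. specialize (Hb j). lia. }
  apply (reduce th Q (j - i) (floorR (INR j * th) - floorR (INR i * th))).
  - lia.
  - unfold f in E. assert (Ez : floorR (INR Q * fr (INR i * th)) = floorR (INR Q * fr (INR j * th))).
    { assert (H1 := Hb i). assert (H2 := Hb j). lia. }
    destruct (fl_spec (INR Q * fr (INR i * th))) as [A1 A2].
    destruct (fl_spec (INR Q * fr (INR j * th))) as [B1 B2].
    rewrite Ez in A1, A2.
    rewrite minus_INR by lia. rewrite minus_IZR.
    replace ((INR j - INR i) * th - (IZR (floorR (INR j * th)) - IZR (floorR (INR i * th))))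
      with (fr (INR j * th) - fr (INR i * th)) by (unfold fr; ring).
    assert (Hd : Rabs (INR Q * (fr (INR j * th) - fr (INR i * th))) <= 1).
    { apply Rabs_le. lra. }
    rewrite Rabs_mult, Rabs_pos_eq in Hd by lra.
    apply (Rmult_le_reg_l (INR Q)); auto. unfold Rdiv. rewrite Rmult_1_l, Rinv_r; lra.
Qed.

Lemma distZ_nonneg x : 0 <= dist_Z x.
Proof. unfold dist_Z. destruct (fl_spec x). apply Rmin_glb; lra. Qed.

Lemma distZ_le x m : dist_Z x <= Rabs (x - IZR m).
Proof.
  unfold dist_Z. destruct (fl_spec x).
  destruct (Z_le_gt_dec m (floorR x)) as [h|h].
  - apply IZR_le in h. eapply Rle_trans; [apply Rmin_l|]. unfold Rabs; destruct (Rcase_abs _); lra.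
  - assert (h' : IZR (floorR x) + 1 <= IZR m) by (rewrite <- plus_IZR; apply IZR_le; lia).
    eapply Rle_trans; [apply Rmin_r|]. unfold Rabs; destruct (Rcase_abs _); lra.
Qed.

Lemma distZ_pos a n : irrational a -> (1 <= n)%nat -> 0 < dist_Z (a * INR n).
Proof.
  intros Hi Hn. unfold dist_Z. destruct (fl_spec (a * INR n)) as [H1 H2].
  apply Rmin_glb_lt; [|lra].
  destruct H1 as [H1|H1]; [lra|]. exfalso.
  apply (Hi (floorR (a * INR n)) (Z.of_nat n)); [lia|].
  rewrite H1, <- INR_IZR_INZ. field. apply not_0_INR. lia.
Qed.

Lemma finmin (v : nat -> R) M : (forall n, (1 <= n)%nat -> 0 < v n) ->
  exists c, c > 0 /\ forall n, (1 <= n < M)%nat -> c <= v n.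
Proof.
  intros Hv. induction M.
  - exists 1. split; [lra|]. intros; lia.
  - destruct IHM as [c [Hc H]].
    exists (Rmin c (v (Nat.max M 1))). split.
    + apply Rmin_glb_lt; auto. apply Hv. lia.
    + intros n Hn. destruct (Nat.eq_dec n M) as [->|h].
      * rewrite Nat.max_l by lia. apply Rmin_r.
      * eapply Rle_trans; [apply Rmin_l|]. apply H. lia.
Qed.

Lemma dioph_alpha a tau t : irrational a -> has_type a tau -> t > tau ->
  exists c, c > 0 /\ forall n, (1 <= n)%nat -> c <= Rpower (INR n) t * dist_Z (a * INR n).
Proof.
  intros Hi [Hub _] Ht.
  assert (Hnot : ~ type_set a t) by (intros Hs; specialize (Hub t Hs); lra).
  assert (Hex : exists eps M, eps > 0 /\ forall n, (n >= M)%nat -> (n >= 1)%nat ->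
                  eps <= Rpower (INR n) t * dist_Z (a * INR n)).
  { apply NNPP. intros Hn. apply Hnot. intros eps Heps M. apply NNPP. intros Hn2.
    apply Hn. exists eps, M. split; auto. intros n h1 h2. apply Rnot_lt_le. intros Hl.
    apply Hn2. exists n. auto. }
  destruct Hex as [eps [M [He HM]]].
  destruct (finmin (fun n => Rpower (INR n) t * dist_Z (a * INR n)) M) as [c [Hc Hf]].
  { intros n Hn. apply Rmult_lt_0_compat. unfold Rpower; apply exp_pos. apply distZ_pos; auto. }
  exists (Rmin eps c). split. apply Rmin_glb_lt; auto.
  intros n Hn. destruct (Nat.lt_ge_cases n M).
  - eapply Rle_trans; [apply Rmin_r|]. apply Hf. lia.
  - eapply Rle_trans; [apply Rmin_l|]. apply HM; lia.
Qed.

Lemma t_pos a tau t : irrational a -> has_type a tau -> t > tau -> 0 < t.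
Proof.
  intros Hi Hh Ht. destruct (dioph_alpha a tau t Hi Hh Ht) as [c [Hc H]].
  apply Rnot_le_lt. intros Ht0.
  set (Q := Z.to_nat (up (1 / c))).
  destruct (archimed (1 / c)) as [A1 A2].
  assert (Hcc : 0 < 1 / c) by (unfold Rdiv; rewrite Rmult_1_l; apply Rinv_0_lt_compat; lra).
  assert (Hup : (1 <= up (1 / c))%Z).
  { assert (0 < IZR (up (1/c))) by lra. apply lt_IZR in H0. lia. }
  assert (HQ : INR Q = IZR (up (1 / c))) by (unfold Q; rewrite INR_IZR_INZ, Z2Nat.id by lia; reflexivity).
  destruct (dirichlet a Q ltac:(unfold Q; lia)) as [q [p [Hq [_ He]]]].
  specialize (H q ltac:(lia)).
  assert (Hp1 : Rpower (INR q) t <= 1).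
  { rewrite <- (Rpower_O (INR q)) by (apply lt_0_INR; lia). apply Rle_Rpower; auto.
    apply (le_INR 1). lia. }
  assert (Hd := distZ_le (a * INR q) p).
  assert (Hd0 := distZ_nonneg (a * INR q)).
  assert (0 <= Rpower (INR q) t) by (unfold Rpower; left; apply exp_pos).
  rewrite Rmult_comm in He.
  assert (c <= 1 / INR Q) by nra.
  rewrite HQ in H1.
  assert (IZR (up (1/c)) * c > 1).
  { replace 1 with ((1/c) * c) at 2 by (field; lra). apply Rmult_lt_compat_r; lra. }
  assert (c * IZR (up (1 / c)) <= 1).
  { apply (Rmult_le_compat_r (IZR (up (1/c)))) in H1; [|lra].
    replace (1 / IZR (up (1 / c)) * IZR (up (1 / c))) with 1 in H1 by (field; lra). lra. }
  lra.
Qed.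

Lemma tau_nonneg a tau : irrational a -> has_type a tau -> 0 <= tau.
Proof.
  intros Hi Hh. apply Rnot_lt_le. intros Hn.
  assert (H := t_pos a tau (tau / 2) Hi Hh ltac:(lra)). lra.
Qed.

Lemma dioph_theta a tau t : a > 1 -> irrational a -> has_type a tau -> t > tau ->
  exists c1, c1 > 0 /\ forall M, (1 <= M)%nat -> forall P : Z,
    c1 <= Rpower (INR M) t * Rabs (INR M / a - IZR P).
Proof.
  intros Ha Hi Hh Ht.
  assert (Htp := t_pos a tau t Hi Hh Ht).
  destruct (dioph_alpha a tau t Hi Hh Ht) as [c [Hc H]].
  assert (HR2 : 0 < Rpower 2 t) by (unfold Rpower; apply exp_pos).
  exists (Rmin (Rmin (1 / a) 1) (c / (a * Rpower 2 t))). split.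
  { apply Rmin_glb_lt; [apply Rmin_glb_lt|]; try lra.
    - unfold Rdiv; rewrite Rmult_1_l; apply Rinv_0_lt_compat; lra.
    - unfold Rdiv. apply Rmult_lt_0_compat; auto. apply Rinv_0_lt_compat. nra. }
  intros M HM P.
  assert (HMr : 1 <= INR M) by (apply (le_INR 1); lia).
  assert (HpM : 1 <= Rpower (INR M) t).
  { rewrite <- (Rpower_O (INR M)) by lra. apply Rle_Rpower; lra. }
  assert (Hab := Rabs_pos (INR M / a - IZR P)).
  destruct (Z_le_gt_dec P 0) as [hP|hP].
  - eapply Rle_trans; [apply Rmin_l|]. eapply Rle_trans; [apply Rmin_l|].
    apply IZR_le in hP.
    assert (INR M / a - IZR P >= 1 / a).
    { unfold Rdiv. assert (INR M * / a >= 1 * / a).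
      { apply Rle_ge, Rmult_le_compat_r; [apply Rlt_le, Rinv_0_lt_compat; lra| lra]. }
      lra. }
    assert (0 < 1 / a) by (unfold Rdiv; rewrite Rmult_1_l; apply Rinv_0_lt_compat; lra).
    assert (1 / a <= Rabs (INR M / a - IZR P)) by (rewrite Rabs_pos_eq; lra).
    nra.
  - destruct (Rle_lt_dec 1 (Rabs (INR M / a - IZR P))) as [h1|h1].
    + eapply Rle_trans; [apply Rmin_l|]. eapply Rle_trans; [apply Rmin_r|]. nra.
    + eapply Rle_trans; [apply Rmin_r|].
      set (n := Z.to_nat P).
      assert (Hn : INR n = IZR P) by (unfold n; rewrite INR_IZR_INZ, Z2Nat.id by lia; reflexivity).
      specialize (H n ltac:(unfold n; lia)).
      assert (Hd := distZ_le (a * INR n) (Z.of_nat M)).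
      rewrite <- INR_IZR_INZ in Hd.
      replace (a * INR n - INR M) with (- a * (INR M / a - IZR P)) in Hd by (rewrite Hn; field; lra).
      rewrite Rabs_mult, Rabs_Ropp, (Rabs_pos_eq a) in Hd by lra.
      assert (Hle : INR n <= 2 * INR M).
      { apply Rlt_le, Rabs_le_inv2 in h1. rewrite Hn.
        assert (INR M / a <= INR M).
        { unfold Rdiv. rewrite <- (Rmult_1_r (INR M)) at 2. apply Rmult_le_compat_l; [lra|].
          rewrite <- Rinv_1. apply Rinv_le_contravar; lra. }
        lra. }
      assert (Hpw : Rpower (INR n) t <= Rpower 2 t * Rpower (INR M) t).
      { rewrite Rpower_mult_distr by lra. apply Rle_Rpower_l; [lra|].
        split; [rewrite Hn; assert (IZR 0 < IZR P) by (apply IZR_lt; lia); lra| lra]. }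
      assert (0 <= Rpower (INR n) t) by (unfold Rpower; left; apply exp_pos).
      assert (Hd0 := distZ_nonneg (a * INR n)).
      assert (c <= Rpower 2 t * a * (Rpower (INR M) t * Rabs (INR M / a - IZR P))).
      { eapply Rle_trans; [apply H|].
        eapply Rle_trans. apply Rmult_le_compat; [auto|auto|apply Hpw|apply Hd].
        nra. }
      apply (Rmult_le_reg_l (a * Rpower 2 t)); [nra|].
      replace (a * Rpower 2 t * (c / (a * Rpower 2 t))) with c by (field; lra).
      nra.
Qed.

Lemma decP_true (P : Prop) : P -> decP P = true.
Proof. intros H. unfold decP. destruct (excluded_middle_informative P); tauto. Qed.
Lemma decP_false (P : Prop) : ~ P -> decP P = false.
Proof. intros H. unfold decP. destruct (excluded_middle_informative P); tauto. Qed.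

Definition IB a b d k : R := if decP (in_beatty a b (Z.of_nat (d * k))) then 1 else 0.

Local Open Scope nat_scope.
Lemma div_step d N : (1 <= d)%nat ->
  (Nat.divide d (S N) /\ S N / d = S (N / d) /\ d * S (N / d) = S N)%nat \/
  (~ Nat.divide d (S N) /\ S N / d = N / d)%nat.
Proof.
  intros Hd.
  assert (H1 := Nat.div_mod N d ltac:(lia)).
  assert (H2 := Nat.mod_upper_bound N d ltac:(lia)).
  set (a := (N / d)%nat) in *. set (b := (N mod d)%nat) in *.
  destruct (Nat.eq_dec (S b) d) as [E|E].
  - left. assert (Hs : S N = d * S a) by lia.
    split; [exists (S a); lia|]. split; [|lia].
    rewrite Hs, Nat.mul_comm, Nat.div_mul by lia. reflexivity.
  - right. split.
    + intros [k Hk]. destruct (Nat.le_gt_cases k a) as [h|h]; [assert (k * d <= a * d) by (apply Nat.mul_le_mono_r; lia)|assert ((a+1) * d <= k * d) by (apply Nat.mul_le_mono_r; lia)]; lia.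
    + symmetry. apply (Nat.div_unique (S N) d a (S b)); lia.
Qed.

Local Close Scope nat_scope.
Lemma count_step a b d N : beatty_div_count a b d (S N) = (beatty_div_count a b d N +
   (if decP (Nat.divide d (S N) /\ in_beatty a b (Z.of_nat (S N))) then 1 else 0))%nat.
Proof.
  unfold beatty_div_count. rewrite seq_S, filter_app, length_app. simpl.
  replace (1 + N)%nat with (S N) by lia.
  destruct (decP _); simpl; lia.
Qed.

Lemma count_eq a b d N : (1 <= d)%nat ->
  INR (beatty_div_count a b d N) = sumR (fun j => IB a b d (S j)) (N / d).
Proof.
  intros Hd. induction N.
  - rewrite Nat.div_0_l by lia. reflexivity.
  - rewrite count_step, plus_INR, IHN.
    destruct (div_step d N Hd) as [[Hdv [E1 E2]]|[Hdv E1]].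
    + rewrite E1. cbn [sumR]. f_equal. unfold IB. rewrite E2.
      destruct (classic (in_beatty a b (Z.of_nat (S N)))) as [h|h].
      * rewrite !decP_true by auto. reflexivity.
      * rewrite !decP_false by tauto. reflexivity.
    + rewrite E1, decP_false by tauto. simpl. lra.
Qed.

Lemma indL_01 L y : 0 < L < 1 -> indL L y = 0 \/ indL L y = 1.
Proof.
  intros HL. assert (B := indL_bounds L y HL). unfold indL in *.
  rewrite <- minus_IZR in *. destruct B as [B1 B2].
  apply le_IZR in B1. apply le_IZR in B2.
  destruct (Z.eq_dec (floorR y - floorR (y - L)) 0) as [e|e].
  - left. rewrite e. reflexivity.
  - right. replace (floorR y - floorR (y - L))%Z with 1%Z by lia. reflexivity.
Qed.

Lemma indL_one L y : 0 < L < 1 -> (indL L y = 1 <-> exists z : Z, y - L < IZR z <= y).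
Proof.
  intros HL. split.
  - intros H. exists (floorR y). unfold indL in H. destruct (fl_spec y). destruct (fl_spec (y - L)).
    split; lra.
  - intros [z [H1 H2]]. unfold indL.
    assert (A1 := fl_le z y H2).
    assert (A2 := fl_lt z (y - L) H1).
    assert (A3 : (floorR y - 1 <= floorR (y - L))%Z).
    { apply fl_le. rewrite minus_IZR. destruct (fl_spec y). lra. }
    rewrite <- minus_IZR. replace (floorR y - floorR (y - L))%Z with 1%Z by lia. reflexivity.
Qed.

Lemma beatty_link a b (n : Z) : a > 1 ->
  ((exists m : Z, floorR (a * IZR m + b) = n) <-> indL (1 / a) ((b - IZR n) / a) = 1).
Proof.
  intros Ha.
  assert (HL : 0 < 1 / a < 1).
  { split. unfold Rdiv; rewrite Rmult_1_l; apply Rinv_0_lt_compat; lra.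
    apply (Rmult_lt_reg_l a); [lra|]. replace (a * (1 / a)) with 1 by (field; lra). lra. }
  rewrite indL_one by auto.
  set (u := (b - IZR n) / a).
  assert (Hu : a * u = b - IZR n) by (unfold u; field; lra).
  split.
  - intros [m Hm]. exists (- m)%Z. destruct (fl_spec (a * IZR m + b)) as [F1 F2].
    rewrite Hm in F1, F2. rewrite opp_IZR. split.
    + apply (Rmult_lt_reg_l a); [lra|]. replace (a * (u - 1/a)) with (a * u - 1) by (field; lra).
      lra.
    + apply (Rmult_le_reg_l a); [lra|]. lra.
  - intros [z [H1 H2]]. exists (- z)%Z. apply fl_unique. rewrite opp_IZR.
    assert (a * (u - 1/a) < a * IZR z) by (apply Rmult_lt_compat_l; lra).
    assert (a * IZR z <= a * u) by (apply Rmult_le_compat_l; lra).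
    replace (a * (u - 1/a)) with (a * u - 1) in * by (field; lra).
    lra.
Qed.

Definition uk a b d k := (b - IZR (Z.of_nat (d * k))) / a.

Lemma L_bounds a : a > 1 -> 0 < 1 / a < 1.
Proof.
  intros Ha. split. unfold Rdiv; rewrite Rmult_1_l; apply Rinv_0_lt_compat; lra.
  apply (Rmult_lt_reg_l a); [lra|]. replace (a * (1 / a)) with 1 by (field; lra). lra.
Qed.

Lemma IB_le a b d k : a > 1 -> IB a b d k <= indL (1 / a) (uk a b d k).
Proof.
  intros Ha. unfold IB. destruct (classic (in_beatty a b (Z.of_nat (d * k)))) as [h|h].
  - rewrite decP_true by auto. destruct h as [m [Hm Hf]].
    assert (E : exists m0 : Z, floorR (a * IZR m0 + b) = Z.of_nat (d * k)).
    { exists (Z.of_nat m). rewrite <- INR_IZR_INZ. auto. }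
    apply (beatty_link a b _ Ha) in E. unfold uk. lra.
  - rewrite decP_false by auto. apply indL_bounds, L_bounds; auto.
Qed.

Lemma IB_eq a b d k : a > 1 -> (1 <= d)%nat -> INR k > b ->
  IB a b d k = indL (1 / a) (uk a b d k).
Proof.
  intros Ha Hd Hk. destruct (indL_01 (1/a) (uk a b d k) (L_bounds a Ha)) as [h|h].
  - unfold IB. rewrite decP_false; [auto|].
    intros [m [Hm Hf]]. assert (E : exists m0 : Z, floorR (a * IZR m0 + b) = Z.of_nat (d * k)).
    { exists (Z.of_nat m). rewrite <- INR_IZR_INZ. auto. }
    apply (beatty_link a b _ Ha) in E. unfold uk in h. lra.
  - rewrite h. unfold uk in h. apply (beatty_link a b _ Ha) in h. destruct h as [m Hm].
    destruct (fl_spec (a * IZR m + b)) as [F1 F2]. rewrite Hm in F1.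
    rewrite <- INR_IZR_INZ, mult_INR in F1.
    assert (INR k <= INR d * INR k).
    { assert (1 <= INR d) by (apply (le_INR 1); lia). assert (0 <= INR k) by apply pos_INR. nra. }
    assert (Hm1 : (1 <= m)%Z).
    { destruct (Z_le_gt_dec 1 m); auto. assert (IZR m <= 0) by (apply IZR_le; lia). nra. }
    unfold IB. rewrite decP_true; auto.
    exists (Z.to_nat m). split; [lia|]. rewrite INR_IZR_INZ, Z2Nat.id by lia. auto.
Qed.

Lemma gap (g : nat -> R) B : (forall j, 0 <= g j <= 1) -> (forall j, INR (S j) > B -> g j = 0) ->
  forall K, sumR g K <= INR K /\ sumR g K <= Rabs B.
Proof.
  intros H1 H2 K. induction K.
  - simpl. split; [lra| apply Rabs_pos].
  - cbn [sumR]. rewrite S_INR. destruct IHK as [A B'].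
    destruct (Rlt_le_dec B (INR (S K))) as [h|h].
    + rewrite (H2 K h). split; lra.
    + specialize (H1 K). rewrite S_INR in h. split; [lra|].
      assert (B <= Rabs B) by apply Rle_abs. lra.
Qed.

Lemma Rpower_pos x y : 0 < Rpower x y.
Proof. unfold Rpower; apply exp_pos. Qed.

Theorem lemma4p6 (alpha beta tau : R) :
  alpha > 1 -> irrational alpha -> has_type alpha tau ->
  exists eps0 : R, eps0 > 0 /\
  forall eps : R, 0 < eps < eps0 ->
  exists C : R, forall d N : nat, (d >= 1)%nat -> (N >= 1)%nat ->
    Rabs (INR (beatty_div_count alpha beta d N) - INR N / (alpha * INR d))
      <= C * Rpower (INR N) (tau / (1 + tau) + eps).
Proof.
  intros Ha Hi Hh. exists 1. split; [lra|]. intros eps [He0 He1].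
  assert (Htau := tau_nonneg alpha tau Hi Hh).
  set (t := tau + eps).
  assert (Ht : t > tau) by (unfold t; lra).
  assert (Htp : 0 < t) by (unfold t; lra).
  destruct (dioph_theta alpha tau t Ha Hi Hh Ht) as [c1 [Hc1 Hdio]].
  set (e := t / (1 + t)).
  set (A := Rpower c1 (1 / t)).
  assert (HA : 0 < A) by apply Rpower_pos.
  exists (Rabs beta + 3 / A + 3).
  intros d N Hd HN.
  assert (HL := L_bounds alpha Ha).
  set (L := 1 / alpha) in *.
  assert (HNr : 1 <= INR N) by (apply (le_INR 1); lia).
  assert (HNp : 0 < INR N) by lra.
  assert (Hdr : 1 <= INR d) by (apply (le_INR 1); lia).
  assert (He_le : e <= tau / (1 + tau) + eps).
  { unfold e, t.
    replace ((tau + eps) / (1 + (tau + eps))) with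
      (tau / (1 + tau) + eps / ((1 + tau) * (1 + tau + eps))) by (field; lra).
    assert (eps / ((1 + tau) * (1 + tau + eps)) <= eps).
    { apply (Rmult_le_reg_r ((1 + tau) * (1 + tau + eps))); [nra|].
      replace (eps / ((1 + tau) * (1 + tau + eps)) * ((1 + tau) * (1 + tau + eps))) with eps
        by (field; lra). nra. }
    lra. }
  set (X := Rpower (INR N) e).
  assert (HX1 : 1 <= X).
  { unfold X. rewrite <- (Rpower_O (INR N)) by lra. apply Rle_Rpower; auto.
    unfold e. apply Rlt_le. unfold Rdiv. apply Rmult_lt_0_compat; [lra|apply Rinv_0_lt_compat; lra]. }
  assert (HXle : X <= Rpower (INR N) (tau / (1 + tau) + eps)) by (apply Rle_Rpower; auto).
  destruct (archimed X) as [U1 U2].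
  assert (Hup : (1 <= up X)%Z).
  { assert (IZR 0 < IZR (up X)) by lra. apply lt_IZR in H. lia. }
  set (Q := Z.to_nat (up X)).
  assert (HQ : INR Q = IZR (up X)) by (unfold Q; rewrite INR_IZR_INZ, Z2Nat.id by lia; reflexivity).
  set (th := - INR d / alpha).
  destruct (dirichlet th Q ltac:(unfold Q; lia)) as [q [p [Hq [Hg Hqp]]]].
  assert (HQq : INR q <= INR Q) by (apply le_INR; lia).
  assert (Hqr : 1 <= INR q) by (apply (le_INR 1); lia).
  assert (Hqp' : Rabs (INR q * th - IZR p) <= 1 / INR q).
  { eapply Rle_trans; [apply Hqp|]. apply Rmult_le_compat_l; [lra|]. apply Rinv_le_contravar; lra. }
  set (K := (N / d)%nat).
  assert (G := global th (beta / alpha) L q p ltac:(lia) Hg Hqp' HL K).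
  rewrite count_eq by lia. fold K.
  set (SZ := sumR (fun j => indL L (beta / alpha + INR (S j) * th)) K) in *.
  set (SB := sumR (fun j => IB alpha beta d (S j)) K).
  assert (Hgap : Rabs (SB - SZ) <= Rabs beta).
  { assert (Hgg : sumR (fun j => indL L (uk alpha beta d (S j)) - IB alpha beta d (S j)) K <= Rabs beta).
    { apply (gap (fun j => indL L (uk alpha beta d (S j)) - IB alpha beta d (S j)) beta).
    - intros j. assert (h1 := IB_le alpha beta d (S j) Ha).
      assert (h2 := indL_bounds L (uk alpha beta d (S j)) HL).
      fold L in h1. unfold IB in *. destruct (decP _); split; try lra.
    - intros j hj. unfold L. rewrite <- IB_eq; auto; try lra; lia. }
    rewrite sumR_minus in Hgg.
      assert (E : sumR (fun j => indL L (uk alpha beta d (S j))) K = SZ).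
      { unfold SZ. apply sumR_ext. intros j _. f_equal. unfold uk, th.
        rewrite <- INR_IZR_INZ, mult_INR. field. lra. }
      rewrite E in Hgg. fold SB in Hgg.
      assert (0 <= SZ - SB).
      { rewrite <- E. unfold SB. rewrite <- sumR_minus. rewrite <- (Rmult_0_r (INR K)), <- sumR_const.
        apply sumR_le. intros j _. assert (h1 := IB_le alpha beta d (S j) Ha). unfold L. lra. }
      rewrite Rabs_minus_sym, Rabs_pos_eq; lra. }
  assert (Hqd : c1 * X <= Rpower (INR (q * d)) t).
  { specialize (Hdio (q * d)%nat ltac:(nia) (- p)%Z).
    assert (E : Rabs (INR (q * d) / alpha - IZR (- p)) = Rabs (INR q * th - IZR p)).
    { rewrite <- Rabs_Ropp. f_equal. unfold th. rewrite mult_INR, opp_IZR. field. lra. }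
    rewrite E in Hdio.
    assert (HRp := Rpower_pos (INR (q * d)) t).
    assert (c1 <= Rpower (INR (q * d)) t * (1 / INR Q)).
    { eapply Rle_trans; [apply Hdio|]. apply Rmult_le_compat_l; lra. }
    apply (Rmult_le_compat_r (INR Q)) in H; [|lra].
    replace (Rpower (INR (q * d)) t * (1 / INR Q) * INR Q) with (Rpower (INR (q * d)) t) in H
      by (field; lra).
    assert (c1 * X <= c1 * INR Q) by (apply Rmult_le_compat_l; lra). lra. }
  assert (Hqd2 : A * Rpower (INR N) (1 / (1 + t)) <= INR (q * d)).
  { assert (Hqdp : 0 < INR (q * d)) by (apply lt_0_INR; nia).
    replace (INR (q * d)) with (Rpower (Rpower (INR (q * d)) t) (1 / t)).
    2:{ rewrite Rpower_mult. replace (t * (1 / t)) with 1 by (field; lra). apply Rpower_1; auto. }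
    replace (Rpower (INR N) (1 / (1 + t))) with (Rpower X (1 / t)).
    2:{ unfold X. rewrite Rpower_mult. f_equal. unfold e. field. lra. }
    unfold A. rewrite Rpower_mult_distr by (lra || (unfold X; apply Rpower_pos)).
    apply Rle_Rpower_l; [apply Rlt_le; unfold Rdiv; rewrite Rmult_1_l; apply Rinv_0_lt_compat; lra|].
    split; [|auto]. apply Rmult_lt_0_compat; lra. }
  assert (HK : INR K * INR d <= INR N).
  { rewrite <- mult_INR. apply le_INR. unfold K. rewrite Nat.mul_comm. apply Nat.Div0.mul_div_le. }
  assert (HK2 : INR N < INR K * INR d + INR d).
  { rewrite <- mult_INR, <- plus_INR. apply lt_INR. unfold K.
    assert (H1 := Nat.div_mod N d ltac:(lia)). assert (H2 := Nat.mod_upper_bound N d ltac:(lia)). lia. }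
  assert (HKq : 3 * INR K / INR q <= 3 / A * X).
  { assert (HNe : INR N = Rpower (INR N) (1 / (1 + t)) * X).
    { unfold X. rewrite <- Rpower_plus. replace (1 / (1 + t) + e) with 1 by (unfold e; field; lra).
      rewrite Rpower_1; lra. }
    assert (Hp1 := Rpower_pos (INR N) (1 / (1 + t))).
    rewrite mult_INR in Hqd2.
    apply (Rmult_le_reg_r (INR q * INR d * A)); [apply Rmult_lt_0_compat; [apply Rmult_lt_0_compat|]; lra|].
    replace (3 * INR K / INR q * (INR q * INR d * A)) with (3 * (INR K * INR d) * A) by (field; lra).
    replace (3 / A * X * (INR q * INR d * A)) with (3 * X * (INR q * INR d)) by (field; lra).
    assert (3 * (INR K * INR d) * A <= 3 * INR N * A) by nra.
    assert (3 * X * (A * Rpower (INR N) (1 / (1 + t))) <= 3 * X * (INR q * INR d)).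
    { apply Rmult_le_compat_l; [lra|auto]. }
    nra. }
  assert (HKL : Rabs (INR K * L - INR N / (alpha * INR d)) <= 1).
  { replace (INR N / (alpha * INR d)) with ((INR N / INR d) * L) by (unfold L; field; lra).
    assert (INR K <= INR N / INR d).
    { apply (Rmult_le_reg_r (INR d)); [lra|]. replace (INR N / INR d * INR d) with (INR N) by (field; lra). lra. }
    assert (INR N / INR d < INR K + 1).
    { apply (Rmult_lt_reg_r (INR d)); [lra|]. replace (INR N / INR d * INR d) with (INR N) by (field; lra). lra. }
    apply Rabs_le. nra. }
  apply Rabs_le_inv2 in G. apply Rabs_le_inv2 in Hgap. apply Rabs_le_inv2 in HKL.
  assert (HQX : INR Q <= X + 1) by lra.
  assert (Hfin : Rabs (SB - INR N / (alpha * INR d)) <= (Rabs beta + 3 / A + 3) * X).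
  { apply Rabs_le. assert (0 <= Rabs beta) by apply Rabs_pos.
    assert (0 < 3 / A) by (unfold Rdiv; apply Rmult_lt_0_compat; [lra|apply Rinv_0_lt_compat; lra]).
    split; nra. }
  eapply Rle_trans; [apply Hfin|]. apply Rmult_le_compat_l; auto.
  assert (0 <= Rabs beta) by apply Rabs_pos.
  assert (0 < 3 / A) by (unfold Rdiv; apply Rmult_lt_0_compat; [lra|apply Rinv_0_lt_compat; lra]).
  lra.
Qed.
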